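(* Let $\Phi:(\mathcal{S},g)\to(\mathcal{M},\bar g)$ be an isometric immersion of an $n$-dimensional orientable Riemannian manifold into a semi-Riemannian manifold with co-dimension $k$. Assume that $\dim\mathrm{Im}\,\widetilde h_p$ is constant on $\mathcal{S}$ (equivalently, $\dim\mathscr{U}_p$ is constant on $\mathcal{S}$). Then the shear space $\mathrm{Im}\,\widetilde h$ and the umbilical space $\mathscr{U}$ of $\mathcal{S}$ are well defined, and $$\mathscr{U}=(\mathrm{Im}\,\widetilde h)^\perp,\qquad k-\dim\mathscr{U}=\dim\mathrm{Im}\,\widetilde h.$$
   Context: $g=\Phi^\star\bar g$ is positive definite. $h$ is the second fundamental form, $A_\xi$ the shape operator ($g(A_\xi X,Y)=\bar g(h(X,Y),\xi)$), $H=\frac1n\mathrm{tr}_gh$ the mean curvature vector, and $\widetilde h(X,Y)=h(X,Y)-g(X,Y)H$ the total shear tensor. The shear space at $p$ is $\mathrm{Im}\,\widetilde h_p=\mathrm{span}\{\widetilde h(v,w):v,w\in T_p\mathcal{S}\}$ and the umbilical space at $p$ is $\mathscr{U}_p=\{\xi_p\in T_p\mathcal{S}^\perp:A_{\xi_p}\text{ proportional to the identity}\}$. When these have constant dimension, the shear space of $\mathcal{S}$ is $\mathrm{Im}\,\widetilde h=\bigcup_p\mathrm{Im}\,\widetilde h_p$ (a module over functions on $\mathcal{S}$ of dimension $\dim\mathrm{Im}\,\widetilde h_p$), and the umbilical space of $\mathcal{S}$ is $\mathscr{U}=\{\xi\text{ normal vector field}:A_\xi\text{ proportional to identity}\}$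 (a module of dimension $\dim\mathscr{U}_p$). $(\mathrm{Im}\,\widetilde h)^\perp$ denotes the normal vector fields $\bar g$-orthogonal at each point to $\mathrm{Im}\,\widetilde h_p$. *)

(* Defs.v *)
(* Pointwise (linear-algebraic) model of the normal geometry
   of an isometric immersion. *)
From HB Require Import structures.
From mathcomp Require Import all_boot all_order all_algebra.
Set Implicit Arguments. Unset Strict Implicit. Unset Printing Implicit Defensive.
Import Order.TTheory GRing.Theory Num.Theory.
Local Open Scope ring_scope.

Section Immersion.
Variables (R : realFieldType) (n k : nat).
(* At a point: G = Gram matrix of the induced metric g on T_pS ~ R^n
   (row-vector coordinates), B = Gram matrix of bar g on T_pS^perp ~ R^k,
   hc i j = h(e_i, e_j) in T_pS^perp. *)
Variables (G : 'M[R]_n) (B : 'M[R]_k) (hc : 'I_n -> 'I_n -> 'rV[R]_k).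

Definition gform (v w : 'rV[R]_n) : R := (v *m G *m w^T) 0 0.
Definition gbarform (x y : 'rV[R]_k) : R := (x *m B *m y^T) 0 0.
Definition sff (v w : 'rV[R]_n) : 'rV[R]_k :=
  \sum_(i < n) \sum_(j < n) (v 0 i * w 0 j) *: hc i j.
Definition meancurv : 'rV[R]_k :=
  n%:R^-1 *: \sum_(i < n) \sum_(j < n) (invmx G) i j *: hc i j.
Definition shear (v w : 'rV[R]_n) : 'rV[R]_k := sff v w - gform v w *: meancurv.
Definition shear_space : {vspace 'rV[R]_k} :=
  <<[seq shear (delta_mx 0%R i) (delta_mx 0%R j) | i <- enum 'I_n, j <- enum 'I_n]>>%VS.
(* shape operator A_xi : the unique endomorphism with g(A_xi X, Y) = bar g(h(X,Y), xi),
   as a matrix acting on row vectors X |-> X *m A_xi *)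
Definition shape_op (xi : 'rV[R]_k) : 'M[R]_n :=
  (\matrix_(i < n, j < n) gbarform (hc i j) xi) *m invmx G.
Definition umbilical (xi : 'rV[R]_k) : Prop := exists c : R, shape_op xi = c%:M.
Definition orth_to (W : {vspace 'rV[R]_k}) (xi : 'rV[R]_k) : Prop :=
  forall eta, eta \in W -> gbarform eta xi = 0.
End Immersion.

Definition posdef (R : realFieldType) (n : nat) (G : 'M[R]_n) : Prop :=
  G^T = G /\ forall u : 'rV[R]_n, u != 0 -> 0 < (u *m G *m u^T) 0 0.

(* Main.v *)
Require Import Defs.
From HB Require Import structures.
From mathcomp Require Import all_boot all_order all_algebra.
From mathcomp Require Import zify.
Set Implicit Arguments. Unset Strict Implicit. Unset Printing Implicit Defensive.
Import Order.TTheory GRing.Theory Num.Theory.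
Local Open Scope ring_scope.

Section L.
Variables (R : realFieldType) (n k : nat) (G : 'M[R]_n) (B : 'M[R]_k) (hc : 'I_n -> 'I_n -> 'rV[R]_k).

Lemma gbarE x xi : gbarform B x xi = \sum_l (x *m B) 0 l * xi 0 l.
Proof. by rewrite /gbarform [X in X = _]mxE; apply: eq_bigr => l _; rewrite [xi^T _ _]mxE. Qed.

Lemma gbar0 xi : gbarform B 0 xi = 0.
Proof. by rewrite /gbarform !mul0mx mxE. Qed.
Lemma gbarD x y xi : gbarform B (x + y) xi = gbarform B x xi + gbarform B y xi.
Proof. by rewrite /gbarform !mulmxDl mxE. Qed.
Lemma gbarZ a x xi : gbarform B (a *: x) xi = a * gbarform B x xi.
Proof. by rewrite /gbarform -!scalemxAl mxE. Qed.
Lemma gbarN x xi : gbarform B (- x) xi = - gbarform B x xi.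
Proof. by rewrite -scaleN1r gbarZ mulN1r. Qed.
Lemma gbar_sum (I : finType) (a : I -> R) (v : I -> 'rV_k) xi :
  gbarform B (\sum_i a i *: v i) xi = \sum_i a i * gbarform B (v i) xi.
Proof.
rewrite (big_morph (fun x => gbarform B x xi) (fun x y => gbarD x y xi) (gbar0 xi)).
by apply: eq_bigr => i _; rewrite gbarZ.
Qed.

Lemma gbar_sum2 (a : 'I_n -> 'I_n -> R) (v : 'I_n -> 'I_n -> 'rV_k) xi :
  gbarform B (\sum_i \sum_j a i j *: v i j) xi = \sum_i \sum_j a i j * gbarform B (v i j) xi.
Proof.
rewrite (big_morph (fun x => gbarform B x xi) (fun x y => gbarD x y xi) (gbar0 xi)).
by apply: eq_bigr => i _; rewrite gbar_sum.
Qed.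

Lemma orth_spanP (X : seq 'rV[R]_k) xi :
  orth_to B <<X>>%VS xi <-> (forall x, x \in X -> gbarform B x xi = 0).
Proof.
split=> [H x Hx|H eta].
  by apply: H; apply: memv_span.
move=> /(@coord_span _ _ _ (in_tuple X)) ->.
rewrite gbar_sum big1 // => i _.
by rewrite H ?mulr0 // mem_nth.
Qed.

Lemma delta_sum i j : \sum_(a < n) \sum_(b < n) ((delta_mx 0 i : 'rV[R]_n) 0 a * (delta_mx 0 j : 'rV[R]_n) 0 b) *: hc a b = hc i j.
Proof.
rewrite (bigD1 i) //=.
rewrite [X in _ + X]big1; last first.
  move=> a ai; rewrite big1 // => b _.
  by rewrite !mxE (negbTE ai) andbF mul0r scale0r.
rewrite addr0 (bigD1 j) //=.
rewrite [X in _ + X]big1; last first.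
  by move=> b bj; rewrite !mxE (negbTE bj) andbF mulr0 scale0r.
by rewrite !mxE !eqxx mulr1 scale1r addr0.
Qed.

Lemma gform_delta i j : gform G (delta_mx 0 i) (delta_mx 0 j) = G i j.
Proof. by rewrite /gform -rowE trmx_delta -colE !mxE. Qed.


Lemma posdef_unit : posdef G -> G \in unitmx.
Proof.
move=> [_ pd]; rewrite -row_free_unit -kermx_eq0.
apply/negPn/negP => /rowV0Pn [u /sub_kermxP uG u0].
by have := pd u u0; rewrite uG mul0mx mxE ltxx.
Qed.

Definition Mxi xi := \matrix_(i < n, j < n) gbarform B (hc i j) xi.

Lemma shear_gen xi i j : gbarform B (shear G hc (delta_mx 0 i) (delta_mx 0 j)) xi
   = Mxi xi i j - G i j * gbarform B (meancurv G hc) xi.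
Proof.
by rewrite /shear gbarD gbarN gbarZ /sff delta_sum gform_delta mxE.
Qed.

Lemma part1 xi : posdef G -> (forall i j, hc i j = hc j i) ->
  umbilical G B hc xi <-> orth_to B (shear_space G hc) xi.
Proof.
move=> hG hs; have Gu := posdef_unit hG.
rewrite /shear_space; apply: (iff_trans _ (iff_sym (orth_spanP _ _))).
have shape : forall c, shape_op G B hc xi = c%:M <-> Mxi xi = c *: G.
  move=> c; rewrite /shape_op -/(Mxi xi); split=> [E|->].
    by rewrite -(mulmxKV Gu (Mxi xi)) E mul_scalar_mx.
  by rewrite -scalemxAl mulmxV // scalemx1.
split.
  move=> [c /shape E] x /allpairsP [[i j] [_ _ ->]] /=.
  rewrite shear_gen E mxE.
  suff -> : gbarform B (meancurv G hc) xi = c by rewrite mulrC subrr.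
  rewrite /meancurv gbarZ gbar_sum2.
  rewrite (eq_bigr (fun a => \sum_(b < n) (invmx G a b * c) * G b a)); last first.
    move=> a _; apply: eq_bigr => b _.
    have -> : gbarform B (hc a b) xi = Mxi xi a b by rewrite mxE.
    rewrite E mxE.
    have -> : G a b = G b a by rewrite -{1}(proj1 hG) mxE.
    by rewrite mulrA.
  have -> : \sum_(a < n) \sum_(b < n) invmx G a b * c * G b a = c * \tr (invmx G *m G).
    rewrite /mxtrace mulr_sumr; apply: eq_bigr => a _; rewrite mxE mulr_sumr.
    by apply: eq_bigr => b _; rewrite -mulrA mulrCA.
  rewrite mulVmx // mxtrace1 mulrCA mulVf ?mulr1 // pnatr_eq0.
  by rewrite -lt0n (leq_ltn_trans _ (ltn_ord i)).
move=> H; exists (gbarform B (meancurv G hc) xi); apply/shape.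
apply/matrixP => i j; rewrite [(_ *: G) i j]mxE mulrC.
apply/eqP; rewrite -subr_eq0 -shear_gen; apply/eqP/H.
by apply: allpairs_f; rewrite mem_enum.
Qed.


Section P2.
Variable W : {vspace 'rV[R]_k}.
Let bs := vbasis W.
Definition Mw : 'M[R]_(k, \dim W) := \matrix_(l < k, i < \dim W) (tnth bs i *m B) 0 l.
Definition fw : 'Hom('rV[R]_k, 'rV[R]_(\dim W)) := linfun (mulmxr Mw).

Lemma orth_basis xi : orth_to B W xi <-> forall i, gbarform B (tnth bs i) xi = 0.
Proof.
rewrite -{1}(span_basis (vbasisP W)) -/bs.
apply: (iff_trans (orth_spanP _ _)); split=> [H i|H x /tnthP [i ->]]; last exact: H.
by apply: H; apply: mem_tnth.
Qed.

Lemma memU xi : xi \in lker fw <-> orth_to B W xi.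
Proof.
apply: (iff_trans _ (iff_sym (orth_basis xi))).
have key : forall i, (xi *m Mw) 0 i = gbarform B (tnth bs i) xi.
  move=> i; rewrite gbarE [LHS]mxE; apply: eq_bigr => l _.
  by rewrite [Mw _ _]mxE mulrC.
rewrite memv_ker lfunE /=; split=> [/eqP/rowP E i|H].
  by have := E i; rewrite key mxE.
by apply/eqP/rowP => i; rewrite key H mxE.
Qed.

Lemma dimU : B \in unitmx -> (k - \dim (lker fw) = \dim W)%N.
Proof.
move=> Bu.
have h1 := limg_ker_dim fw fullv.
rewrite capfv dimvf in h1.
have h2 : (\dim (fw @: fullv) <= \dim W)%N.
  by have := dimvS (subvf (fw @: fullv)); rewrite dimvf /dim /= mul1n.
pose psi : 'Hom('rV[R]_k, 'rV[R]_k) := linfun (mulmxr B).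
have kpsi : lker psi = 0%VS.
  apply/eqP/lker0P => x y; rewrite !lfunE /= => E.
  by rewrite -(mulmxK Bu x) E mulmxK.
have dpsi : \dim (psi @: W) = \dim W by apply: limg_dim_eq; rewrite kpsi capv0.
have disj : (lker fw :&: (psi @: W) = 0)%VS.
  apply/eqP; rewrite -subv0; apply/subvP => x /memv_capP [/memU xU /memv_imgP [w wW]].
  rewrite lfunE /= => xE; rewrite memv0.
  have := xU w wW; rewrite gbarE -xE => S.
  have S' := psumr_eq0P (fun l _ => (ltac:(by rewrite -expr2 sqr_ge0) : 0 <= x 0 l * x 0 l)) S.
  apply/eqP/rowP => l; rewrite mxE.
  by have /eqP := S' l isT; rewrite mulf_eq0 orbb => /eqP.
have h3 := dimv_disjoint_sum disj.
have h4 := dimvS (subvf (lker fw + psi @: W)%VS).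
rewrite dimvf /dim /= mul1n in h1 h4.
rewrite h3 dpsi in h4.
lia.
Qed.
End P2.

End L.

Theorem corollary3p3 (R : realFieldType) (n k : nat) (S : Type)
  (G : S -> 'M[R]_n) (B : S -> 'M[R]_k) (hc : S -> 'I_n -> 'I_n -> 'rV[R]_k)
  (hG : forall p, posdef (G p))
  (hBsym : forall p, (B p)^T = B p)
  (hBnd : forall p, B p \in unitmx)
  (hsym : forall p i j, hc p i j = hc p j i)
  (hconst : forall p q, \dim (shear_space (G p) (hc p)) = \dim (shear_space (G q) (hc q))) :
  forall p,
    (forall xi, umbilical (G p) (B p) (hc p) xi <->
                orth_to (B p) (shear_space (G p) (hc p)) xi)
    /\ exists U : {vspace 'rV[R]_k},
         (forall xi, xi \in U <-> umbilical (G p) (B p) (hc p) xi)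
         /\ (k - \dim U = \dim (shear_space (G p) (hc p)))%N.
Proof.
move=> p; split.
  by move=> xi; apply: part1; [exact: hG | exact: hsym].
exists (lker (fw (B p) (shear_space (G p) (hc p)))); split.
  move=> xi; apply: iff_trans (memU _ _ _) _.
  by apply: iff_sym; apply: part1; [exact: hG | exact: hsym].
exact: dimU.
Qed.
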